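(* Let $c>0$ and $m>0$ be constants and let $f:\mathbb{Z}\to\mathbb{Z}$ be a non-decreasing map such that $f(j)-f(i)\le j-i$ for all integers $i<j$, and $f(j)-f(i)\ge c\,(j-i)$ for all integers $i,j$ with $i+m\le j$. Let $B$ be an integer-valued random variable with $0<\mathrm{Var}(B)<\infty$. Then $$\mathrm{Var}(f(B))\ \ge\ c^2\left(1-\frac{2m}{c\sqrt{\mathrm{Var}(B)}}\right)\mathrm{Var}(B).$$ *)

(* Defs.v *)
From HB Require Import structures.
From mathcomp Require Import all_boot all_order all_algebra.
From mathcomp Require Import all_classical all_reals all_analysis.
Set Implicit Arguments. Unset Strict Implicit. Unset Printing Implicit Defensive.

(* Main.v *)
Require Import Defs.
From HB Require Import structures.
From mathcomp Require Import all_boot all_order all_algebra.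
From mathcomp Require Import all_classical all_reals all_analysis.
From mathcomp Require Import ring lra zify.
Import Order.TTheory GRing.Theory Num.Theory.
Local Open Scope ring_scope.

Lemma sq_lemma (R : realType) (z y c m : R) : 0 <= z -> 0 <= y -> 0 <= c -> 0 <= m ->
  c * (y - m) <= z -> c ^+ 2 * (y ^+ 2 - 2 * m * y) <= z ^+ 2.
Proof.
move=> z0 y0 c0 m0 hz.
have [ym|ym] := leP m y.
  have h1 : 0 <= c * (y - m) by apply: mulr_ge0; lra.
  have h2 : (c * (y - m)) ^+ 2 <= z ^+ 2 by rewrite ler_sqr //; exact: nnegrE.
  apply: le_trans h2; rewrite exprMn; apply: ler_wpM2l; first exact: sqr_ge0.
  nra.
apply: le_trans (sqr_ge0 z); apply: mulr_ge0_le0; first exact: sqr_ge0.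
nra.
Qed.

Lemma find_cross (R : realType) (f : int -> int) (a : R) (k : nat) (n : int) :
  (f n)%:~R <= a -> a < (f (n + k%:Z))%:~R ->
  exists t : int, (f t)%:~R <= a /\ a < (f (t + 1))%:~R.
Proof.
elim: k n => [|k IH] n h1 h2.
  by move: h2; rewrite addr0 => h2; lra.
have [h3|h3] := leP ((f (n + 1))%:~R) a.
  apply: (IH (n + 1)) => //; by rewrite -addrA -intS.
by exists n.
Qed.

Lemma exists_cross (R : realType) (c m : R) (f : int -> int) (a : R) :
  0 < c -> 0 < m ->
  (forall i j : int, i%:~R + m <= j%:~R ->
     c * (j - i)%:~R <= (f j - f i)%:~R) ->
  exists t : int, (f t)%:~R <= a /\ a < (f (t + 1))%:~R.
Proof.
move=> c0 m0 hg.
set K := m + (`|a| + `|(f 0)%:~R|) / c.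
set N := (Num.truncn K).+1.
have hN : K < N%:R by exact: truncnS_gt.
have eN : (N%:Z)%:~R = N%:R :> R by rewrite -pmulrn.
have hK : (`|a| + `|(f 0)%:~R|) / c * c = `|a| + `|(f 0)%:~R| :> R.
  by rewrite divfK // gt_eqF.
have a1 := ler_norm a; have a2 := ler_norm (- a); rewrite normrN in a2; have a3 := normr_ge0 a.
have b1 := ler_norm ((f 0)%:~R : R); have b2 := ler_norm (- (f 0)%:~R : R); rewrite normrN in b2.
have hcN : `|a| + `|(f 0)%:~R| < c * N%:R.
  rewrite -hK; move: hN; rewrite /K.
  set q := (`|a| + `|(f 0)%:~R|) / c => hN.
  have : q < N%:R by lra.
  nra.
have hmN : m <= N%:R.
  have : 0 <= (`|a| + `|(f 0)%:~R|) / c by apply: divr_ge0 => //; lra.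
  rewrite /K in hN; lra.
have g1 := hg 0 (N%:Z); rewrite subr0 eN intrB add0r in g1.
have {}g1 := g1 hmN.
have g2 := hg (- N%:Z) 0; rewrite sub0r opprK eN intrB intrN eN in g2.
have {}g2 := g2 ltac:(lra).
apply: (@find_cross R f a (N + N)%N (- N%:Z)).
  lra.
rewrite PoszD addrA addNr add0r; lra.
Qed.

Lemma pointwise (R : realType) (c m : R) (f : int -> int) (a : R) :
  0 < c -> 0 < m -> c <= 1 ->
  {homo f : i j / (i <= j)%R} ->
  (forall i j : int, (i < j)%R -> (f j - f i <= j - i)%R) ->
  (forall i j : int, i%:~R + m <= j%:~R ->
     c * (j - i)%:~R <= (f j - f i)%:~R) ->
  exists s : R, forall x : int,
    c ^+ 2 * ((x%:~R - s) ^+ 2 - 2 * m * `|x%:~R - s|) <= ((f x)%:~R - a) ^+ 2.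
Proof.
move=> c0 m0 c1 hmo hl hg.
have [t [ht1 ht2]] := @exists_cross R c m f a c0 m0 hg.
have hd : f (t + 1) = f t + 1.
  have h1 : f t < f (t + 1) by rewrite -(ltr_int R); lra.
  have h2 := hl t (t + 1) ltac:(lia).
  lia.
have hd' : (f (t + 1))%:~R = (f t)%:~R + 1 :> R by rewrite hd intrD.
rewrite hd' in ht2.
have [th [th0 [th1 [th2 th3]]]] : exists th : R, 0 <= th /\ th <= 1 /\
    c - ((f t)%:~R + 1 - a) <= c * th /\ c * th <= a - (f t)%:~R.
  have [hb|hb] := leP c ((f t)%:~R + 1 - a).
    exists 0; rewrite mulr0; lra.
  exists (1 - ((f t)%:~R + 1 - a) / c).
  have e : c * (1 - ((f t)%:~R + 1 - a) / c) = c - ((f t)%:~R + 1 - a).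
    by rewrite mulrBr mulr1 mulrC divfK // gt_eqF.
  rewrite e.
  have q1 : ((f t)%:~R + 1 - a) / c < 1 by rewrite ltr_pdivrMr // mul1r.
  have q2 : 0 <= ((f t)%:~R + 1 - a) / c by apply: divr_ge0; lra.
  lra.
exists (t%:~R + th) => x.
have [hx|hx] := ltP t x.
  have hx' : (t + 1)%:~R <= x%:~R :> R by rewrite ler_int; lia.
  rewrite intrD in hx'.
  have hf : (f t)%:~R + 1 <= (f x)%:~R :> R.
    have h : ((f (t + 1))%:~R <= (f x)%:~R :> R) by rewrite ler_int; apply: hmo; lia.
    by rewrite hd' in h.
  rewrite ger0_norm; last lra.
  apply: sq_lemma; [lra | lra | lra | lra |].
  have [hc|hc] := leP ((t + 1)%:~R + m) (x%:~R : R).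
    have := hg _ _ hc; rewrite !intrB hd' !intrD.
    nra.
  rewrite intrD in hc; nra.
have hf : (f x)%:~R <= (f t)%:~R :> R by rewrite ler_int; apply: hmo.
have hx' : x%:~R <= t%:~R :> R by rewrite ler_int.
rewrite distrC -sqrrN opprB -(sqrrN ((f x)%:~R - a)) opprB ger0_norm; last lra.
apply: sq_lemma; [lra | lra | lra | lra |].
have [hc|hc] := leP (x%:~R + m) (t%:~R : R).
  have := hg _ _ hc; rewrite !intrB.
  nra.
nra.
Qed.

Section helpers.
Local Open Scope classical_set_scope.

Lemma meas_int (R : realType) (d : measure_display) (T : measurableType d)
  (B : T -> int) (h : int -> R) :
  measurable_fun setT (fun t => (B t)%:~R : R) ->
  measurable_fun setT (fun t => h (B t)).
Proof.
move=> hX _ A mA.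
pose S := \bigcup_(n in [set n : int | A (h n)]) [set (n%:~R : R)].
have mS : measurable S.
  apply: countable_measurable; first exact: measurable_set1.
  apply: bigcup_countable; first exact: countableP.
  by move=> n _; exact: countable1.
have := hX measurableT S mS.
congr measurable; apply/seteqP; split=> t /=.
  move=> [_ [n An /= /eqP]]; rewrite eqr_int => /eqP ->; by split.
by move=> [_ Ht]; split=> //; exists (B t).
Qed.

Lemma var_bound (R : realType) (d : measure_display) (T : measurableType d)
  (P : probability T R) (X Z : T -> R) (alpha s K : R) :
  measurable_fun setT X -> measurable_fun setT Z ->
  ('V_P[X] < +oo)%E -> 0 <= alpha ->
  (forall t, 0 <= Z t) ->
  (forall t, alpha * (X t - s) ^+ 2 - K <= Z t) ->
  ((alpha * fine 'V_P[X] - K)%:E <= \int[P]_t (Z t)%:E)%E.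
Proof.
move=> mX mZ Vfin a0 Z0 hZ.
set mu := fine 'E_P[X].
pose D t := X t - mu.
have hV : 'V_P[X] = (\int[P]_t (D t * D t)%:E)%E.
  by rewrite /variance covariance.unlock expectation.unlock /= /D /mu expectation.unlock.
have mD : measurable_fun setT D.
  by apply: measurable_realfun.measurable_funB => //; exact: measurable_cst.
have mDD : measurable_fun setT (fun t => (D t * D t)%R).
  exact: measurable_realfun.measurable_funM.
have V0 : (0 <= 'V_P[X])%E by apply: variance_ge0.
have Vfn : 'V_P[X] \is a fin_num by rewrite ge0_fin_numE.
have iDD : P.-integrable setT (EFin \o (fun t => (D t * D t)%R)).
  apply/integrableP; split; first exact/measurable_realfun.measurable_EFinP.
  have -> : (\int[P]_x `|(EFin \o (fun t : T => (D t * D t)%R)) x| = 'V_P[X])%E.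
    rewrite hV; apply: eq_integral => t _ /=; rewrite ger0_norm //; rewrite -expr2; exact: sqr_ge0.
  exact: Vfin.
have eDD : (\int[P]_x (EFin \o (fun t => (D t * D t)%R)) x = 'V_P[X])%E by rewrite hV.
have iD : P.-integrable setT (EFin \o D).
  apply: (@le_integrable _ _ _ P setT measurableT _ (EFin \o (fun t => 1 + D t * D t))).
  - exact/measurable_realfun.measurable_EFinP.
  - move=> t _ /=; rewrite ?abse_EFin lee_fin (ger0_norm (x := 1 + _)); last first.
      by rewrite addr_ge0 // -expr2 sqr_ge0.
    have h1 := real_normK (num_real (D t)).
    have h2 := normr_ge0 (D t).
    rewrite -expr2 -h1; nra.
  - have -> : EFin \o (fun t => 1 + D t * D t) =
        (fun x => (EFin \o cst 1%R) x + (EFin \o (fun t => (D t * D t)%R)) x)%E.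
      by apply/funext => t; rewrite /= EFinD.
    apply: integrableD => //; exact: finite_measure_integrable_cst.
have eE : ('E_P[X] = \int[P]_t (D t)%:E + mu%:E)%E.
  rewrite expectation.unlock.
  transitivity (\int[P]_t ((EFin \o D) t + (EFin \o cst mu) t))%E.
    by apply: eq_integral => t _ /=; rewrite -EFinD /D subrK.
  rewrite integralD //; last exact: finite_measure_integrable_cst.
  have -> : (\int[P]_t (EFin \o cst mu) t = \int[P]_t (cst mu%:E) t)%E by [].
  rewrite integral_cst //. rewrite [X in (_ * X)%E](_ : _ = 1%E); last exact: probability_setT. by rewrite mule1.
have Ifn : (\int[P]_t (D t)%:E)%E \is a fin_num.
  exact: (integrable_fin_num measurableT iD).
have I0 : (\int[P]_t (D t)%:E = 0)%E.
  have h : (fine 'E_P[X] = fine (\int[P]_t (D t)%:E + mu%:E))%E by rewrite eE.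
  rewrite -/mu fineD // in h.
  have h0 : fine (\int[P]_t (D t)%:E)%E = 0 by simpl in h; lra.
  by rewrite -(fineK Ifn) h0.
have [Zoo|Zfin] := eqVneq (\int[P]_t (Z t)%:E)%E +oo%E.
  by rewrite Zoo leey.
have iZ : P.-integrable setT (EFin \o Z).
  apply/integrableP; split; first exact/measurable_realfun.measurable_EFinP.
  have -> : (\int[P]_x `|(EFin \o Z) x| = \int[P]_t (Z t)%:E)%E.
    by apply: eq_integral => t _ /=; rewrite ger0_norm.
  by rewrite ltey.
pose e := mu - s.
have eL : (fun t => ((alpha * (D t * D t) + (2 * alpha * e) * D t) - K)%:E) =
   (fun t => ((alpha%:E * (EFin \o (fun t => (D t * D t)%R)) t
      + (2 * alpha * e)%:E * (EFin \o D) t) - (EFin \o cst K) t)%E).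
  by apply/funext => t /=; rewrite EFinB EFinD !EFinM.
have iL : P.-integrable setT
   (fun t => ((alpha%:E * (EFin \o (fun t => (D t * D t)%R)) t
      + (2 * alpha * e)%:E * (EFin \o D) t) - (EFin \o cst K) t)%E).
  apply: integrableB => //; last exact: finite_measure_integrable_cst.
  by apply: integrableD => //; apply: integrableZl.
have key : (\int[P]_t ((alpha * (D t * D t) + (2 * alpha * e) * D t) - K)%:E
    <= \int[P]_t (Z t)%:E)%E.
  apply: le_integral => //.
  move=> t _; rewrite lee_fin.
  have := hZ t; have hx : X t - s = D t + e by rewrite /D /e; lra.
  rewrite hx => h.
  have : 0 <= alpha * (e * e) by apply: mulr_ge0 => //; rewrite -expr2 sqr_ge0.
  rewrite expr2 in h; nra.
move: key; rewrite eL integralB //; first last.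
- exact: finite_measure_integrable_cst.
- by apply: integrableD => //; apply: integrableZl.
rewrite integralD //; try by apply: integrableZl.
rewrite !integralZl //.
have -> : (\int[P]_t (EFin \o cst K) t = \int[P]_t (cst K%:E) t)%E by [].
rewrite integral_cst //.
rewrite [X in (K%:E * X)%E](_ : _ = 1%E); last exact: probability_setT.
have -> : (\int[P]_x (EFin \o D) x = \int[P]_t (D t)%:E)%E by [].
rewrite mule1 eDD I0 mule0 adde0.
by rewrite -(fineK Vfn) EFinB EFinM.
Qed.
End helpers.

Theorem lemma3p2 (R : realType) (d : measure_display) (T : measurableType d)
  (P : probability T R) (c m : R) (f : int -> int) (B : T -> int) :
  0 < c -> 0 < m ->
  {homo f : i j / (i <= j)%R} ->
  (forall i j : int, (i < j)%R -> (f j - f i <= j - i)%R) ->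
  (forall i j : int, i%:~R + m <= j%:~R ->
     c * (j - i)%:~R <= (f j - f i)%:~R) ->
  measurable_fun setT (fun t => (B t)%:~R : R) ->
  (0 < 'V_P[fun t => (B t)%:~R])%E ->
  ('V_P[fun t => (B t)%:~R] < +oo)%E ->
  let v := fine 'V_P[fun t => (B t)%:~R] in
  ((c ^+ 2 * (1 - 2 * m / (c * Num.sqrt v)) * v)%:E
     <= 'V_P[fun t => (f (B t))%:~R])%E.
Proof.
move=> c0 m0 hmo hl hg mX V0 Voo; rewrite /=.
set v := fine 'V_P[fun t => (B t)%:~R].
have c1 : c <= 1.
  pose N := (Num.truncn m).+1.
  have hN : m < N%:R by exact: truncnS_gt.
  have eN : (N%:Z)%:~R = N%:R :> R by rewrite -pmulrn.
  have h1 := hg 0 (N%:Z); rewrite subr0 eN add0r in h1.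
  have {}h1 := h1 (ltW hN).
  have h2 := hl 0 (N%:Z) ltac:(lia).
  rewrite subr0 in h2.
  have h3 : ((f N - f 0)%:~R <= N%:R :> R) by rewrite -eN ler_int.
  have : 0 < N%:R :> R by rewrite ltr0n.
  nra.
have Vfn : 'V_P[fun t => (B t)%:~R] \is a fin_num.
  by rewrite ge0_fin_numE // ltW.
have v0 : 0 < v by rewrite /v -lte_fin fineK.
set a := fine 'E_P[fun t => (f (B t))%:~R].
have hVY : 'V_P[fun t => (f (B t))%:~R] =
    (\int[P]_t ((((f (B t))%:~R - a) * ((f (B t))%:~R - a))%:E))%E.
  by rewrite /variance covariance.unlock expectation.unlock /= /a expectation.unlock.
set sv := Num.sqrt v.
have sv0 : 0 < sv by rewrite /sv sqrtr_gt0.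
have svv : sv * sv = v by rewrite /sv -expr2 sqr_sqrtr // ltW.
have [hsm|hsm] := leP sv m.
  apply: le_trans (variance_ge0 _ _); rewrite lee_fin.
  have q : 1 <= m / sv by rewrite ler_pdivlMr // mul1r.
  have q2 : 2 * m / (c * sv) = 2 / c * (m / sv).
    by field; rewrite gt_eqF // gt_eqF.
  have q3 : 1 <= 1 / c by rewrite ler_pdivlMr // mul1r.
  rewrite q2; apply: mulr_le0_ge0; last exact: ltW.
  apply: mulr_ge0_le0; first exact: sqr_ge0.
  have : 2 <= 2 / c * (m / sv).
    have -> : 2 / c = 2 * (1 / c) by rewrite mulrA mulr1.
    nra.
  lra.
have [s hs] := @pointwise R c m f a c0 m0 c1 hmo hl hg.
have hZ : forall t, c ^+ 2 * (1 - m / sv) * ((B t)%:~R - s) ^+ 2 - c ^+ 2 * m * sv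
    <= ((f (B t))%:~R - a) * ((f (B t))%:~R - a).
  move=> t; have := hs (B t); rewrite -expr2.
  set y := (B t)%:~R - s => h.
  have hy : 2 * m * `|y| <= m / sv * y ^+ 2 + m * sv.
    have h1 : 0 <= (`|y| - sv) ^+ 2 by exact: sqr_ge0.
    have h2 : y ^+ 2 = `|y| ^+ 2 by rewrite real_normK // num_real.
    have e : m / sv * y ^+ 2 + m * sv - 2 * m * `|y| = m / sv * (`|y| - sv) ^+ 2.
      rewrite h2; field; by rewrite gt_eqF.
    have : 0 <= m / sv * (`|y| - sv) ^+ 2 by apply: mulr_ge0 => //; apply: divr_ge0; lra.
    lra.
  have hc2 : 0 <= c ^+ 2 by exact: sqr_ge0.
  have : c ^+ 2 * (2 * m * `|y|) <= c ^+ 2 * (m / sv * y ^+ 2 + m * sv).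
    exact: ler_wpM2l.
  move=> hh; move: h => h; nra.
have al0 : 0 <= c ^+ 2 * (1 - m / sv).
  apply: mulr_ge0; first exact: sqr_ge0.
  have : m / sv < 1 by rewrite ltr_pdivrMr // mul1r.
  lra.
have mZ : measurable_fun setT
    (fun t => ((f (B t))%:~R - a) * ((f (B t))%:~R - a) : R).
  exact: (@meas_int R d T B (fun n => ((f n)%:~R - a) * ((f n)%:~R - a))).
have Z0 : forall t, 0 <= ((f (B t))%:~R - a) * ((f (B t))%:~R - a) :> R.
  by move=> t; rewrite -expr2; exact: sqr_ge0.
have := @var_bound R d T P (fun t => (B t)%:~R)
  (fun t => ((f (B t))%:~R - a) * ((f (B t))%:~R - a))
  (c ^+ 2 * (1 - m / sv)) s (c ^+ 2 * m * sv) mX mZ Voo al0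
  Z0 hZ.
rewrite -/v -hVY; apply: le_trans; rewrite lee_fin.
have e1 : c ^+ 2 * (1 - 2 * m / (c * sv)) * v = c ^+ 2 * v - 2 * c * m * sv.
  rewrite -svv; field; rewrite gt_eqF //; rewrite gt_eqF //.
have e2 : c ^+ 2 * (1 - m / sv) * v - c ^+ 2 * m * sv = c ^+ 2 * v - 2 * c ^+ 2 * m * sv.
  rewrite -svv; field; by rewrite gt_eqF.
rewrite e1 e2.
have : c ^+ 2 * m * sv <= c * m * sv.
  have hms : 0 < m * sv by rewrite mulr_gt0.
  rewrite expr2 -[c * c * m * sv]mulrA -[c * m * sv]mulrA.
  apply: ler_wpM2r; [exact: ltW | nra].
lra.
Qed.
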